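(* Suppose $\{0,1\}\subseteq\Sigma$ and let $\pi=x_1^4x_2^8x_3^9$. Then $\mathrm{TD}(\pi,\mathrm{NC}\Pi^{|\Sigma|}_{\infty,9})\le4$; specifically, the set $\{(v_1,+),(v_2,-),(v_3,-),(v_4,-)\}$ with $v_1=(01)^4(001)^8(0001)^9$, $v_2=(01)^{9!}(001)^{9!}(0001)^{9!}(00001)^{9!}$, $v_3=0^8(10^6)^80^3$, $v_4=(01)^4(001)^4(0001)^9$ is a teaching set for $\pi$ w.r.t. $\mathrm{NC}\Pi^{|\Sigma|}_{\infty,9}$.
   Context: Fix a countably infinite set $X$ of variables and an alphabet $\Sigma$ disjoint from $X$. A pattern is a nonempty finite string over $X\cup\Sigma$. A substitution is a morphism $h:(X\cup\Sigma)^*\to\Sigma^*$ fixing letters; $L(\pi)$ (erasing pattern language) is the set of all $h(\pi)$. A non-cross pattern is a constant-free pattern $x_0^{n_0}\cdots x_k^{n_k}$ with distinct variables and $n_i\ge1$; $\mathrm{NC}\Pi^z_{\infty,m}$ is the class of non-cross patterns over an alphabet of size $z$ in which every variable occurs at most $m$ times. A labelled example is $(w,\pm)$ with $w\in\Sigma^*$; a teaching set for $\pi$ w.r.t. a class $\Pi$ is a set $T$ of labelled examples consistent with $\pi$ ($w\in L(\pi)$ iff label $+$) such that every $\tau\in\Pi$ consistent with $T$ has $L(\tau)=L(\pi)$; $\mathrm{TD}(\pi,\Pi)$ is its minimum size. *)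

(* Defs.v *)
From mathcomp Require Import all_boot.
Set Implicit Arguments. Unset Strict Implicit. Unset Printing Implicit Defensive.

(* Variables X := nat (countably infinite); symbols of a pattern: inl x (variable) or inr a (letter). *)
Definition pattern (S : Type) := seq (nat + S).

Definition subst (S : Type) (h : nat -> seq S) (p : pattern S) : seq S :=
  flatten (map (fun s => match s with inl x => h x | inr a => [:: a] end) p).

(* erasing pattern language membership *)
Definition inL (S : Type) (p : pattern S) (w : seq S) : Prop :=
  exists h : nat -> seq S, subst h p = w.

Definition nc_pattern (S : Type) (xs ns : seq nat) : pattern S :=
  flatten [seq nseq xn.2 (@inl nat S xn.1) | xn <- zip xs ns].

(* NCPi^{|S|}_{infty,m} : non-cross patterns (constant-free, nonempty, distinct variables,
   exponents >= 1) in which every variable occurs at most m times. *)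
Definition in_NC (S : Type) (m : nat) (p : pattern S) : Prop :=
  exists xs ns : seq nat,
    [/\ xs != [::], uniq xs, size xs = size ns,
        all (fun n => (0 < n) && (n <= m)) ns & p = nc_pattern S xs ns].

(* labelled examples: (w, true) = (w,+), (w, false) = (w,-) *)
Definition consistent (S : eqType) (T : seq (seq S * bool)) (p : pattern S) : Prop :=
  forall e, e \in T -> (inL p e.1 <-> e.2 = true).

Definition teaching_set (S : eqType) (C : pattern S -> Prop) (T : seq (seq S * bool))
    (p : pattern S) : Prop :=
  consistent T p /\
  forall tau, C tau -> consistent T tau -> forall w, inL tau w <-> inL p w.

Definition TD_le (S : eqType) (C : pattern S -> Prop) (p : pattern S) (k : nat) : Prop :=
  exists T, size T <= k /\ teaching_set C T p.

Definition pw (S : Type) (u : seq S) (n : nat) : seq S := flatten (nseq n u).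

(* Main.v *)
Require Import Defs.
From mathcomp Require Import all_boot zify.
Set Implicit Arguments. Unset Strict Implicit. Unset Printing Implicit Defensive.

Lemma pwS T (u : seq T) n : pw u n.+1 = u ++ pw u n. Proof. by []. Qed.
Lemma pwD T (u : seq T) a b : pw u (a + b) = pw u a ++ pw u b.
Proof. by rewrite /pw nseqD flatten_cat. Qed.
Lemma pwSr T (u : seq T) n : pw u n.+1 = pw u n ++ u.
Proof. by rewrite -addn1 pwD /pw /= cats0. Qed.
Lemma pw_nil T n : pw (@nil T) n = [::]. Proof. by elim: n. Qed.
Lemma pwM T (u : seq T) a b : pw u (a * b) = pw (pw u a) b.
Proof. elim: b => [|b IH]; first by rewrite muln0. by rewrite mulnS pwD IH. Qed.
Lemma size_pw T (u : seq T) n : size (pw u n) = n * size u.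
Proof. elim: n => // n IH; by rewrite pwS size_cat IH mulSn. Qed.
Lemma map_pw T1 T2 (f : T1 -> T2) u n : map f (pw u n) = pw (map f u) n.
Proof. elim: n => // n IH; by rewrite !pwS map_cat IH. Qed.

Lemma subst_cat S h (p q : pattern S) : subst h (p ++ q) = subst h p ++ subst h q.
Proof. by rewrite /subst map_cat flatten_cat. Qed.
Lemma subst_nseq S h x n : subst h (nseq n (@inl nat S x)) = pw (h x) n.
Proof. elim: n => // n IH. by rewrite -[nseq _ _]cat1s subst_cat IH /subst /= cats0. Qed.

Definition pieces (S : Type) (us : seq (seq S)) (ns : seq nat) : seq S :=
  flatten [seq pw un.1 un.2 | un <- zip us ns].
Lemma pieces_cons S (u : seq S) us n ns : pieces (u :: us) (n :: ns) = pw u n ++ pieces us ns.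
Proof. by []. Qed.

Lemma pieces_nil S (us : seq (seq S)) : pieces us [::] = [::].
Proof. by case: us. Qed.

Lemma subst_nc S h xs ns : subst h (nc_pattern S xs ns) = pieces (map h xs) ns.
Proof.
elim: xs ns => [|x xs IH] [|n ns] //.
rewrite /nc_pattern /= -/(nc_pattern S xs ns) subst_cat subst_nseq IH //.
Qed.

Definition D (S : Type) (w : seq S) (ns : seq nat) :=
  exists us, size us = size ns /\ w = pieces us ns.

Lemma inL_D (S : Type) xs ns (w : seq S) : size xs = size ns ->
  inL (nc_pattern S xs ns) w -> D w ns.
Proof. move=> Hs [h <-]; exists (map h xs); by rewrite size_map subst_nc. Qed.

Lemma D_inL (S : Type) xs ns (w : seq S) : uniq xs -> size xs = size ns ->
  D w ns -> inL (nc_pattern S xs ns) w.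
Proof.
move=> Hu Hs [us [Hus ->]].
exists (fun x => nth [::] us (index x xs)); rewrite subst_nc; congr pieces.
apply: (@eq_from_nth _ [::]); first by rewrite size_map Hs Hus.
move=> i; rewrite size_map => Hi.
by rewrite (nth_map 0) // index_uniq.
Qed.

Fixpoint memb (T : eqType) (w : seq T) (ns : seq nat) : bool :=
  match ns with
  | [::] => w == [::]
  | [:: n] => pw (take (size w %/ n) w) n == w
  | n :: ns' => has (fun L => (pw (take L w) n == take (n * L) w) && memb (drop (n * L) w) ns') (iota 0 (size w %/ n).+1)
  end.

Lemma memb2 (T : eqType) (w : seq T) n m ns : memb w [:: n, m & ns] =
  has (fun L => (pw (take L w) n == take (n * L) w) && memb (drop (n * L) w) (m :: ns)) (iota 0 (size w %/ n).+1).
Proof. by []. Qed.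

Lemma memb_D (T : eqType) ns (w : seq T) : memb w ns -> D w ns.
Proof.
elim: ns w => [|n ns IH] w.
  by move/eqP->; exists [::].
case: ns IH => [|m ns] IH.
  move/eqP=> Hw; exists [:: take (size w %/ n) w]; by rewrite /pieces /= cats0 Hw.
rewrite memb2; case/hasP => L _ /andP[/eqP Hp /IH [us [Hs Hw]]].
exists (take L w :: us); split; first by rewrite /= Hs.
by rewrite pieces_cons Hp -Hw cat_take_drop.
Qed.

Lemma D_memb (T : eqType) ns (w : seq T) : all (fun n => 0 < n) ns -> D w ns -> memb w ns.
Proof.
elim: ns w => [|n ns IH] w.
  by move=> _ [[|u us] [//= _ ->]].
rewrite [all _ _]/=; case/andP=> Hn Hall [us [Hs Hw]]; case: us Hs Hw => [|u us] // Hs Hw.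
have Hsz : size w = n * size u + size (pieces us ns) by rewrite Hw pieces_cons size_cat size_pw.
have Htk : take (size u) w = u.
  by rewrite Hw pieces_cons -(prednK Hn) pwS -catA take_size_cat.
case: ns IH Hall Hs Hw Hsz => [|m ns] IH Hall Hs Hw Hsz.
  rewrite [memb _ _]/=.
  have -> : size w %/ n = size u by rewrite Hsz pieces_nil /= addn0 mulnC mulnK.
  by rewrite Htk Hw pieces_cons pieces_nil cats0.
rewrite memb2; apply/hasP; exists (size u).
  by rewrite mem_iota /= add0n ltnS leq_divRL // Hsz mulnC leq_addr.
rewrite Htk; apply/andP; split.
  by rewrite Hw pieces_cons take_size_cat ?size_pw.
apply: IH => //; exists us; split; first by case: Hs.
by rewrite Hw pieces_cons drop_size_cat ?size_pw.
Qed.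

Lemma memb_map (T1 T2 : eqType) (f : T1 -> T2) : injective f ->
  forall ns w, memb (map f w) ns = memb w ns.
Proof.
move=> Hf; elim=> [|n ns IH] w.
  by case: w.
have Hm : injective (map f) := inj_map Hf.
case: ns IH => [|m ns] IH.
  by rewrite /= size_map -map_take -map_pw inj_eq.
rewrite !memb2 size_map; apply: eq_has => L; cbv beta.
by rewrite -!map_take -map_pw inj_eq // -map_drop IH.
Qed.

Definition G (S : Type) (z o : S) a : seq S := o :: nseq a z ++ [:: o].
Definition blk (S : Type) (z o : S) k : seq S := nseq k z ++ [:: o].
Definition W (S : Type) (z o : S) ks : seq S := flatten (map (blk z o) ks).
Definition occ (S : Type) (d : S) (F w : seq S) p :=
  p + size F <= size w /\ forall t, t < size F -> nth d w (p + t) = nth d F t.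

Lemma size_G (S : Type) (z o : S) a : size (G z o a) = a.+2.
Proof. by rewrite /G /= size_cat size_nseq addn1. Qed.
Lemma size_blk (S : Type) (z o : S) k : size (blk z o k) = k.+1.
Proof. by rewrite /blk size_cat size_nseq addn1. Qed.

Lemma occ_split S d (F w : seq S) p : occ d F w p -> w = take p w ++ F ++ drop (p + size F) w.
Proof.
case=> Hs Hn.
have HF : take (size F) (drop p w) = F.
  apply: (@eq_from_nth _ d); first by rewrite size_takel // size_drop; lia.
  move=> t; rewrite size_takel ?size_drop; last lia.
  by move=> Ht; rewrite nth_take // nth_drop Hn.
rewrite -{1}(cat_take_drop p w); congr (_ ++ _).
by rewrite -{1}(cat_take_drop (size F) (drop p w)) HF drop_drop addnC.
Qed.

Lemma occ_cat S d (F x y : seq S) : occ d F (x ++ F ++ y) (size x).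
Proof.
split; first by rewrite !size_cat; lia.
move=> t Ht; by rewrite nth_cat ltnNge leq_addr /= addKn nth_cat Ht.
Qed.

Lemma occ_embed S d (F L P R : seq S) s : occ d F P s -> occ d F (L ++ P ++ R) (size L + s).
Proof.
case=> Hs Hn; split; first by rewrite !size_cat; lia.
move=> t Ht; rewrite -addnA nth_cat ltnNge leq_addr /= addKn nth_cat ifT ?Hn //; lia.
Qed.

Lemma occ_left S d (F A R : seq S) p : occ d F (A ++ R) p -> p + size F <= size A -> occ d F A p.
Proof.
case=> Hs Hn Hp; split => // t Ht; rewrite -Hn // nth_cat ifT //; lia.
Qed.

Lemma occ_right S d (F A R : seq S) p : occ d F (A ++ R) p -> size A <= p -> occ d F R (p - size A).
Proof.
case=> Hs Hn Hp; split; first by move: Hs; rewrite size_cat; lia.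
move=> t Ht; rewrite -Hn // nth_cat ifF; last lia.
congr nth; lia.
Qed.

Definition PO S d (F A B C : seq S) :=
  (exists s, occ d F A s) \/ (exists s, occ d F B s) \/ (exists s, occ d F C s).

Lemma occ3 S d (F A B C : seq S) p : occ d F (A ++ B ++ C) p ->
  (p + size F <= size A \/ size A <= p) ->
  (p + size F <= size A + size B \/ size A + size B <= p) -> PO d F A B C.
Proof.
move=> H [h1|h1] h2.
  by left; exists p; exact: occ_left H h1.
have H' := occ_right H h1.
case: h2 => h2.
  right; left; exists (p - size A); apply: occ_left H' _; lia.
right; right; exists (p - size A - size B); apply: occ_right H' _; lia.
Qed.

Lemma PO_c S d (F A B C : seq S) : PO d F A B C ->
  exists c, c < 3 /\ exists s, occ d F (nth [::] [:: A; B; C] c) s.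
Proof. by case=> [H|[H|H]]; [exists 0|exists 1|exists 2]. Qed.

Lemma nseq_o_split (S : eqType) (z o : S) : z != o -> forall k r x s,
  nseq k z ++ o :: r = x ++ o :: s ->
  (x = nseq k z /\ r = s) \/ (exists x', x = nseq k z ++ o :: x' /\ r = x' ++ o :: s).
Proof.
move=> Hzo; elim=> [|k IH] r [|c x] s /=.
- by case=> ->; left.
- by case=> <- ->; right; exists x.
- by case=> Hz; rewrite Hz eqxx in Hzo.
- case=> <- /IH [[-> ->]|[x' [-> ->]]]; [by left|by right; exists x'].
Qed.

Lemma nseq_o_inj (S : eqType) (z o : S) : z != o -> forall a b y y',
  nseq a z ++ o :: y = nseq b z ++ o :: y' -> a = b.
Proof.
move=> Hzo; elim=> [|a IH] [|b] y y' //=.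
- by case=> Hz; rewrite Hz eqxx in Hzo.
- by case=> Hz; rewrite Hz eqxx in Hzo.
- by case=> /IH ->.
Qed.

Lemma gapW (S : eqType) (z o : S) : z != o -> forall ks x a y,
  W z o ks = x ++ G z o a ++ y -> a = nth 0 ks (count_mem o x).+1.
Proof.
move=> Hzo; elim=> [|k ks IH] x a y.
  by case: x.
rewrite /W /= -/(W z o ks) /blk -catA /G /= => /(nseq_o_split Hzo) [[-> H]|[x' [-> H]]].
  rewrite count_nseq /= (negbTE Hzo) mul0n.
  case: ks H {IH} => [|k' ks] H.
    by move: H; rewrite /W /=; case: a.
  rewrite /W /= -/(W z o ks) /blk -catA /= -catA /= in H.
  exact: nseq_o_inj Hzo _ _ _ _ (esym H).
rewrite count_cat count_nseq /= (negbTE Hzo) eqxx mul0n /= add1n.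
apply: IH; rewrite H; by [].
Qed.

Definition ksN N := nseq N 1 ++ nseq N 2 ++ nseq N 3 ++ nseq N 4.
Definition v2N (S : Type) (z o : S) N := W z o (ksN N).

Lemma W_cat (S : Type) (z o : S) a b : W z o (a ++ b) = W z o a ++ W z o b.
Proof. by rewrite /W map_cat flatten_cat. Qed.
Lemma W_nseq (S : Type) (z o : S) N k : W z o (nseq N k) = pw (blk z o k) N.
Proof. by rewrite /W map_nseq. Qed.

Lemma v2N_eq (S : Type) (z o : S) N : v2N z o N =
  pw (blk z o 1) N ++ pw (blk z o 2) N ++ pw (blk z o 3) N ++ pw (blk z o 4) N.
Proof. by rewrite /v2N /ksN !W_cat !W_nseq. Qed.

Lemma ks_mono N i j : i <= j -> nth 0 (ksN N) j != 0 -> nth 0 (ksN N) i <= nth 0 (ksN N) j.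
Proof.
rewrite /ksN !nth_cat !size_nseq !nth_nseq.
do ![case: ifP => ? ] => //=; lia.
Qed.

Lemma mono (S : eqType) (z o : S) N p q i j : z != o ->
  occ z (G z o j) (v2N z o N) p -> occ z (G z o i) (v2N z o N) q -> p < q -> 0 < i -> j <= i.
Proof.
move=> Hzo Hp Hq Hpq Hi.
have Ej := occ_split Hp; have Ei := occ_split Hq.
have gj := gapW Hzo Ej; have gi := gapW Hzo Ei.
have Hc : (count_mem o (take p (v2N z o N))).+1 <= count_mem o (take q (v2N z o N)).
  have Hpv : p <= size (v2N z o N) by case: Hp => H _; move: H; rewrite size_G; lia.
  rewrite (_ : q = p + (q - p).-1.+1); last lia.
  rewrite takeD count_cat.
  have -> : drop p (v2N z o N) = G z o j ++ drop (p + size (G z o j)) (v2N z o N).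
    by rewrite {1}Ej drop_size_cat // size_takel.
  rewrite /G /= eqxx; lia.
rewrite gj gi; apply: ks_mono; first lia.
by rewrite -gi -lt0n.
Qed.

Lemma pw_period S d (u : seq S) n t : t + size u < size (pw u n) ->
  nth d (pw u n) (t + size u) = nth d (pw u n) t.
Proof.
case: n => [|n]; first by rewrite size_pw mul0n ltn0.
rewrite size_pw mulSn => H.
rewrite [in LHS]pwS [in RHS]pwSr nth_cat ltnNge leq_addl /= addnK nth_cat size_pw ifT //; lia.
Qed.

Lemma pw_periodk S d (u : seq S) n : forall k t, t + k * size u < size (pw u n) ->
  nth d (pw u n) (t + k * size u) = nth d (pw u n) t.
Proof.
elim=> [|k IH] t H; first by rewrite mul0n addn0.
move: H; rewrite mulSn => H.
rewrite (_ : t + (size u + k * size u) = (t + k * size u) + size u); last lia.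
rewrite pw_period; last lia.
by rewrite IH //; lia.
Qed.

Lemma occ_back S d (F u : seq S) n s : 0 < size u -> occ d F (pw u n) s ->
  occ d F (pw u n) (s %% size u).
Proof.
move=> Hm [Hs Hn]; have E := divn_eq s (size u).
set K := s %/ size u * size u in E.
split; first lia.
move=> t Ht; rewrite -Hn //.
have -> : s + t = (s %% size u + t) + s %/ size u * size u by rewrite -/K; lia.
rewrite pw_periodk // -/K; lia.
Qed.

Lemma occ_fwd S d (F u : seq S) n s k : occ d F (pw u n) s ->
  s + k * size u + size F <= size (pw u n) -> occ d F (pw u n) (s + k * size u).
Proof.
move=> [Hs Hn] Hb; split => // t Ht.
rewrite -Hn // (_ : s + k * size u + t = (s + t) + k * size u); last lia.
rewrite pw_periodk //; lia.
Qed.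

Lemma nth_G (S : Type) (z o : S) a m : 0 < m <= a -> nth z (G z o a) m = z.
Proof.
case: m => [//|m] /= H.
by rewrite nth_cat size_nseq ifT ?nth_nseq ?ifT //; lia.
Qed.

Lemma m_gt (S : eqType) (z o : S) (u : seq S) n a s : z != o -> 0 < size u ->
  occ z (G z o a) (pw u n) s -> s + size u < size (pw u n) -> a < size u.
Proof.
move=> Hzo Hm [Hs Hn] Hb; rewrite ltnNge; apply/negP => Hle.
have h1 := Hn 0 (ltn0Sn _); rewrite addn0 /= in h1.
have h2 := Hn (size u) (ltac:(rewrite size_G; lia)).
rewrite nth_G in h2; last lia.
rewrite pw_period // h1 in h2.
by rewrite h2 eqxx in Hzo.
Qed.

Lemma piece (S : eqType) (z o : S) N (L R u : seq S) n i j : z != o -> 3 <= n ->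
  v2N z o N = L ++ pw u n ++ R -> 0 < i ->
  (exists s, occ z (G z o i) (pw u n) s) -> (exists t, occ z (G z o j) (pw u n) t) -> j <= i.
Proof.
move=> Hzo Hn E Hi [s Hs] [t Ht].
have HP : size (pw u n) = n * size u := size_pw u n.
have H3 : 3 * size u <= n * size u by rewrite leq_mul2r Hn orbT.
have Hsb : s + i.+2 <= size (pw u n) by case: Hs; rewrite size_G.
have Hm : 0 < size u.
  rewrite lt0n; apply/negP => /eqP H0; move: Hsb; rewrite HP H0 muln0; lia.
have Ht0 := occ_back Hm Ht.
have Ht0m : t %% size u < size u := ltn_pmod _ Hm.
have Hs0 := occ_back Hm Hs.
have Hs0m : s %% size u < size u := ltn_pmod _ Hm.
have Him : i < size u.
  apply: (m_gt Hzo Hm Hs0); lia.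
set X := size (pw u n) - i.+2 - s.
have E2 := divn_eq X (size u).
have Hr := ltn_pmod X Hm.
have Hs1 := @occ_fwd _ _ _ _ _ _ (X %/ size u) Hs.
set KM := X %/ size u * size u in E2 Hs1.
have Hs1' : occ z (G z o i) (pw u n) (s + KM) by apply: Hs1; rewrite size_G; lia.
have O1 := occ_embed L R Ht0; have O2 := occ_embed L R Hs1'.
rewrite -E in O1 O2.
apply: (mono Hzo O1 O2 _ Hi); lia.
Qed.

Lemma region_occ (S : Type) (z o : S) N k : 1 <= k <= 4 -> exists p, forall r, r.+2 <= N ->
  occ z (G z o k) (v2N z o N) (p + r * k.+1).
Proof.
move=> Hk.
have [L [R E]] : exists L R, v2N z o N = L ++ pw (blk z o k) N ++ R.
  rewrite v2N_eq.
  case: k Hk => [|[|[|[|[|k]]]]] // _.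
  - by exists [::]; eexists.
  - by exists (pw (blk z o 1) N); eexists.
  - by exists (pw (blk z o 1) N ++ pw (blk z o 2) N); eexists; rewrite -catA.
  - by exists (pw (blk z o 1) N ++ pw (blk z o 2) N ++ pw (blk z o 3) N); exists [::];
      rewrite -!catA cats0.
exists (size L + k) => r Hr.
have Ep : pw (blk z o k) N = (pw (blk z o k) r ++ nseq k z) ++ G z o k ++ pw (blk z o k) (N - r.+2).
  rewrite {1}(_ : N = r + 2 + (N - r.+2)); last lia.
  rewrite !pwD -!catA; congr (_ ++ _).
  by rewrite /pw /= -catA.
have := occ_embed L R (occ_cat z (G z o k) (pw (blk z o k) r ++ nseq k z) (pw (blk z o k) (N - r.+2))).
rewrite -Ep -E size_cat size_pw size_nseq size_blk.
by rewrite (_ : size L + (r * k.+1 + k) = size L + k + r * k.+1) //; lia.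
Qed.

Lemma v2_notin (S : eqType) (z o : S) N : z != o -> 6 <= N ->
  ~ inL (nc_pattern S [:: 1; 2; 3] [:: 4; 8; 9]) (v2N z o N).
Proof.
move=> Hzo HN [h]; rewrite subst_nc /pieces /= cats0 => E.
set A := pw (h 1) 4 in E; set B := pw (h 2) 8 in E; set C := pw (h 3) 9 in E.
have HPO : forall k, 1 <= k <= 4 -> PO z (G z o k) A B C.
  move=> k Hk; have [p Hp] := region_occ z o N Hk.
  have H0 := Hp 0 ltac:(lia); have H2 := Hp 2 ltac:(lia); have H4 := Hp 4 ltac:(lia).
  rewrite -E in H0 H2 H4.
  have Hsz := size_G z o k.
  have : ((p + 0 * k.+1 + size (G z o k) <= size A \/ size A <= p + 0 * k.+1) /\
          (p + 0 * k.+1 + size (G z o k) <= size A + size B \/ size A + size B <= p + 0 * k.+1)) \/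
         ((p + 2 * k.+1 + size (G z o k) <= size A \/ size A <= p + 2 * k.+1) /\
          (p + 2 * k.+1 + size (G z o k) <= size A + size B \/ size A + size B <= p + 2 * k.+1)) \/
         ((p + 4 * k.+1 + size (G z o k) <= size A \/ size A <= p + 4 * k.+1) /\
          (p + 4 * k.+1 + size (G z o k) <= size A + size B \/ size A + size B <= p + 4 * k.+1)).
    rewrite Hsz; lia.
  case=> [[c1 c2]|[[c1 c2]|[c1 c2]]]; [exact: occ3 H0 c1 c2|exact: occ3 H2 c1 c2|exact: occ3 H4 c1 c2].
have Huniq : forall c k l, c < 3 -> 0 < k -> 0 < l ->
    (exists s, occ z (G z o k) (nth [::] [:: A; B; C] c) s) ->
    (exists s, occ z (G z o l) (nth [::] [:: A; B; C] c) s) -> k = l.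
  move=> c k l Hc Hk Hl Ok Ol; apply/eqP; rewrite eqn_leq; apply/andP.
  case: c Hc Ok Ol => [|[|[|c]]] //= _ Ok Ol.
  - have E' : v2N z o N = [::] ++ A ++ B ++ C by rewrite -E.
    by split; [apply: (piece (L:=[::]) (R:=B ++ C)) Hzo _ E' Hl Ol Ok|
               apply: (piece (L:=[::]) (R:=B ++ C)) Hzo _ E' Hk Ok Ol].
  - have E' : v2N z o N = A ++ B ++ C by rewrite -E.
    by split; [apply: (piece (L:=A) (R:=C)) Hzo _ E' Hl Ol Ok|
               apply: (piece (L:=A) (R:=C)) Hzo _ E' Hk Ok Ol].
  - have E' : v2N z o N = (A ++ B) ++ C ++ [::] by rewrite -E catA cats0.
    by split; [apply: (piece (L:=A ++ B) (R:=[::])) Hzo _ E' Hl Ol Ok|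
               apply: (piece (L:=A ++ B) (R:=[::])) Hzo _ E' Hk Ok Ol].
have [c1 [h1 O1]] := PO_c (HPO 1 isT).
have [c2 [h2 O2]] := PO_c (HPO 2 isT).
have [c3 [h3 O3]] := PO_c (HPO 3 isT).
have [c4 [h4 O4]] := PO_c (HPO 4 isT).
have D : forall ca cb a b, ca < 3 -> 0 < a -> 0 < b -> a != b ->
    (exists s, occ z (G z o a) (nth [::] [:: A; B; C] ca) s) ->
    (exists s, occ z (G z o b) (nth [::] [:: A; B; C] cb) s) -> ca != cb.
  move=> ca cb a b hc ha hb hab Oa Ob; apply/eqP => e; rewrite -e in Ob.
  by have := Huniq ca a b hc ha hb Oa Ob; apply/eqP.
have := D c1 c2 1 2 h1 isT isT isT O1 O2; have := D c1 c3 1 3 h1 isT isT isT O1 O3;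
have := D c1 c4 1 4 h1 isT isT isT O1 O4; have := D c2 c3 2 3 h2 isT isT isT O2 O3;
have := D c2 c4 2 4 h2 isT isT isT O2 O4; have := D c3 c4 3 4 h3 isT isT isT O3 O4.
lia.
Qed.

Lemma pieces_nseq_nil (S : Type) ns : pieces (nseq (size ns) (@nil S)) ns = [::].
Proof. by elim: ns => // n ns IH; rewrite /= pieces_cons pw_nil IH. Qed.

Lemma v2_in (S : Type) (z o : S) N ns : (forall n, 0 < n <= 9 -> n %| N) ->
  all (fun n => 0 < n <= 9) ns -> 3 < size ns -> D (v2N z o N) ns.
Proof.
case: ns => [|n1 [|n2 [|n3 [|n4 rest]]]] // Hd Hall _.
move: Hall => /= /andP[h1 /andP[h2 /andP[h3 /andP[h4 _]]]].
exists [:: pw (blk z o 1) (N %/ n1), pw (blk z o 2) (N %/ n2), pw (blk z o 3) (N %/ n3),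
   pw (blk z o 4) (N %/ n4) & nseq (size rest) [::]].
split; first by rewrite /= size_nseq.
rewrite v2N_eq !pieces_cons pieces_nseq_nil.
rewrite cats0 -!pwM !divnK ?Hd //.
Qed.

Lemma D_one (S : Type) (w : seq S) ns : 1 \in ns -> D w ns.
Proof.
elim: ns => [//|n ns IH]; rewrite inE; case: eqP => [<- _|_ /= H].
  exists (w :: nseq (size ns) [::]); split; first by rewrite /= size_nseq.
  by rewrite pieces_cons pieces_nseq_nil /pw /= !cats0.
have [us [Hs Hw]] := IH H; exists ([::] :: us); split; first by rewrite /= Hs.
by rewrite pieces_cons pw_nil.
Qed.

Definition v1b := pw [:: false; true] 4 ++ pw [:: false; false; true] 8 ++ pw [:: false; false; false; true] 9.
Definition v3b := pw [:: false] 8 ++ pw (true :: pw [:: false] 6) 8 ++ pw [:: false] 3.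
Definition v4b := pw [:: false; true] 4 ++ pw [:: false; false; true] 4 ++ pw [:: false; false; false; true] 9.
Definition ok3 (ns : seq nat) := [&& memb v1b ns, ~~ memb v3b ns & ~~ memb v4b ns].

Lemma enum_ok : [&& all (fun a => ~~ ok3 [::a]) (iota 2 8),
  all (fun a => all (fun b => ~~ ok3 [::a;b]) (iota 2 8)) (iota 2 8) &
  all (fun a => all (fun b => all (fun c => ok3 [::a;b;c] ==> ([::a;b;c] == [::4;8;9])) (iota 2 8)) (iota 2 8)) (iota 2 8)].
Proof. vm_compute. reflexivity. Qed.

Lemma ok489 : [&& memb v1b [:: 4; 8; 9], ~~ memb v3b [:: 4; 8; 9] & ~~ memb v4b [:: 4; 8; 9]].
Proof. vm_compute. reflexivity. Qed.

Lemma ok3_only ns : all (fun n => 1 < n <= 9) ns -> 0 < size ns <= 3 -> ok3 ns -> ns = [:: 4; 8; 9].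
Proof.
move=> Hall Hs Hok; have/and3P[e1 e2 e3] := enum_ok.
have Hi : forall a, 1 < a <= 9 -> a \in iota 2 8 by move=> a Ha; rewrite mem_iota; lia.
case: ns Hall Hs Hok => [|a [|b [|c [|d ns]]]] Hall Hs Hok; [by move: Hs| | | |by move: Hs].
- move: Hall => /andP[ha _].
  by have := allP e1 a (Hi a ha); rewrite Hok.
- move: Hall => /and3P[ha hb _].
  by have := allP (allP e2 a (Hi a ha)) b (Hi b hb); rewrite Hok.
- move: Hall => /and4P[ha hb hc _].
  have := allP (allP (allP e3 a (Hi a ha)) b (Hi b hb)) c (Hi c hc).
  by rewrite Hok => /eqP.
Qed.

Lemma blk1 (S : Type) (z o : S) : blk z o 1 = [:: z; o]. Proof. by []. Qed.
Lemma blk2 (S : Type) (z o : S) : blk z o 2 = [:: z; z; o]. Proof. by []. Qed.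
Lemma blk3 (S : Type) (z o : S) : blk z o 3 = [:: z; z; z; o]. Proof. by []. Qed.
Lemma blk4 (S : Type) (z o : S) : blk z o 4 = [:: z; z; z; z; o]. Proof. by []. Qed.

Theorem mainTheorem13 (S : finType) (zero one : S) (h01 : zero != one) :
  let pi : pattern S := nc_pattern S [:: 1; 2; 3] [:: 4; 8; 9] in
  let v1 := pw [:: zero; one] 4 ++ pw [:: zero; zero; one] 8
            ++ pw [:: zero; zero; zero; one] 9 in
  let v2 := pw [:: zero; one] 9`! ++ pw [:: zero; zero; one] 9`!
            ++ pw [:: zero; zero; zero; one] 9`!
            ++ pw [:: zero; zero; zero; zero; one] 9`! in
  let v3 := pw [:: zero] 8 ++ pw (one :: pw [:: zero] 6) 8 ++ pw [:: zero] 3 in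
  let v4 := pw [:: zero; one] 4 ++ pw [:: zero; zero; one] 4
            ++ pw [:: zero; zero; zero; one] 9 in
  TD_le (@in_NC S 9) pi 4 /\
  teaching_set (@in_NC S 9) [:: (v1, true); (v2, false); (v3, false); (v4, false)] pi.
Proof.
move=> pi v1 v2 v3 v4.
pose fb := fun b : bool => if b then one else zero.
have fbI : injective fb.
  by move=> [] [] //= /eqP; rewrite ?(negbTE h01) // eq_sym (negbTE h01).
have E1 : v1 = map fb v1b by reflexivity.
have E3 : v3 = map fb v3b by reflexivity.
have E4 : v4 = map fb v4b by reflexivity.
have E2 : v2 = v2N zero one 9`! by rewrite /v2 v2N_eq blk1 blk2 blk3 blk4.
have N6 : 6 <= 9`! by rewrite factS; have := fact_gt0 8; lia.
have Hd : forall n, 0 < n <= 9 -> n %| 9`! by move=> n Hn; apply: dvdn_fact.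
clearbody v1 v2 v3 v4.
have Hpi : forall w, inL pi w <-> D w [:: 4; 8; 9].
  by move=> w; split; [exact: inL_D | exact: D_inL].
have HDm : forall (wb : seq bool) ns, all (fun n => 0 < n) ns ->
    (D (map fb wb) ns <-> memb wb ns).
  move=> wb ns Hp; rewrite -(memb_map fbI); split; [exact: D_memb|exact: memb_D].
have/and3P[m1 m3 m4] := ok489.
have teach : teaching_set (@in_NC S 9)
    [:: (v1, true); (v2, false); (v3, false); (v4, false)] pi.
  split.
  - move=> e; rewrite !inE => /or4P [] /eqP -> /=.
    + split=> // _; apply/Hpi; rewrite E1; exact: (proj2 (HDm v1b [:: 4; 8; 9] isT) m1).
    + split=> // H; exfalso; apply: (v2_notin h01 N6); rewrite -E2; exact: H.
    + split=> // /Hpi; rewrite E3 => /(proj1 (HDm v3b [:: 4; 8; 9] isT)) M; by rewrite M in m3.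
    + split=> // /Hpi; rewrite E4 => /(proj1 (HDm v4b [:: 4; 8; 9] isT)) M; by rewrite M in m4.
  - move=> tau [xs [ns [Hne Hu Hs Hall ->]]] Hc w.
    have [_ C1] := Hc (v1, true) (mem_head _ _).
    have C1' := C1 erefl.
    have [C2 _] := Hc (v2, false) (ltac:(by rewrite !inE eqxx ?orbT)).
    have [C3 _] := Hc (v3, false) (ltac:(by rewrite !inE eqxx ?orbT)).
    have [C4 _] := Hc (v4, false) (ltac:(by rewrite !inE eqxx ?orbT)).
    have Hpos : all (fun n => 0 < n) ns.
      by apply: sub_all Hall => n /andP[].
    have Hle3 : size ns <= 3.
      rewrite leqNgt; apply/negP => H4.
      have HD : D v2 ns by rewrite E2; exact: v2_in Hd Hall H4.
      by have := C2 (D_inL Hu Hs HD).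
    have Hno1 : all (fun n => 1 < n <= 9) ns.
      apply/allP => n Hn; have/andP[n0 n9] := allP Hall n Hn; rewrite n9 andbT.
      case: n Hn n0 {n9} => [|[|n]] // Hn _.
      by have := C3 (D_inL Hu Hs (D_one v3 Hn)).
    have Hok : ok3 ns.
      apply/and3P; split.
      + have := inL_D Hs C1'; rewrite E1; exact: (proj1 (HDm v1b _ Hpos)).
      + apply/negP => /(proj2 (HDm v3b _ Hpos)); rewrite -E3 => M.
        by have := C3 (D_inL Hu Hs M).
      + apply/negP => /(proj2 (HDm v4b _ Hpos)); rewrite -E4 => M.
        by have := C4 (D_inL Hu Hs M).
    have Hsz : 0 < size ns <= 3.
      by rewrite Hle3 andbT -Hs lt0n size_eq0.
    have Hns := ok3_only Hno1 Hsz Hok; subst ns.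
    split.
    + by move/(inL_D Hs) => HD; apply/Hpi.
    + by move/Hpi => HD; exact: D_inL Hu Hs HD.
split; last exact: teach.
by exists [:: (v1, true); (v2, false); (v3, false); (v4, false)].
Qed.
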